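(* Let $C$ be any strongly intransitive finite two-player game (as defined in the context). Then no learning algorithm competing as player 1 in the open-source competition associated with $C$ is a universal winner; that is, for every algorithm $L'$ there exists an algorithm $L''$ that $L'$ does not defeat.
   Context: Games. A (finite, zero-sum, win/draw/loss, two-player) game is given by finite sets of strategies (“playing programs”) $p'_1,\dots,p'_{n'}$ for player 1 and $p''_1,\dots,p''_{n''}$ for player 2, together with a computable payoff function $C(p'_i,p''_j)\in\{+1,0,-1\}$, where $+1$ means $p'_i\succ p''_j$ (player 1 wins), $0$ means $p'_i\sim p''_j$ (draw) and $-1$ means $p'_i\prec p''_j$ (player 1 loses). The game is strongly intransitive if every strategy $p'_i$ of player 1 has at least one strategy $p''_j=S''(p'_i)$ of player 2 with $p'_i\prec p''_j$, and every strategy $p''_j$ of player 2 has at least one strategy $p'_{\tilde\imath}=S'(p''_j)$ of player 1 with $p'_{\tilde\imath}\succ p''_j$; $S',S''$ are fixed (computable, since the strategy sets are finite) best-response functions selecting such a winning reply. Open-source competition. Learning algorithms are Turing-machine programs (run on a universal Turing machine with unbounded resources). Both learning algorithms know $C$. Algorithm $L'$ (for player 1) receives the source code of the opposing algorithm $L''$ as input, and $L''$ (for player 2) receives the source code of $L'$; if they halt, $L'[L'']$ outputs a strategy $p'_i$ of player 1 and $L''[L']$ outputs a strategy $p''_j$ of player 2. An algorithm may fail to halt on a given input. $L'$ defeats $L''$ if either (i) both $L'[L'']$ and $L''[L']$ halt with outputs $p'_i$ and $p''_j$ and $p'_i\succ p''_j$, or (ii) $L'[L'']$ halts with an output and demonstrates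 (within a fixed, agreed axiomatic system) that $L''[L']$ does not halt. An algorithm $L'$ is a universal winner for the game $C$ if it defeats every opposing algorithm $L''$. *)

(* Defs.v *)
From mathcomp Require Import all_boot.
Set Implicit Arguments. Unset Strict Implicit. Unset Printing Implicit Defensive.

(* Model of computation: the weak call-by-value lambda calculus L          *)
(* (Forster & Smolka), a Turing-complete model standing in for Turing      *)
(* machines on a universal machine.               *)

Inductive term : Type :=
| var (n : nat)
| app (s t : term)
| lam (s : term).

(* substitution of index k by (closed) u *)
Fixpoint subst (s : term) (k : nat) (u : term) : term :=
  match s with
  | var n => if Nat.eqb n k then u else var n
  | app s1 s2 => app (subst s1 k u) (subst s2 k u)
  | lam s1 => lam (subst s1 (S k) u)
  end.

Inductive eval : term -> term -> Prop :=
| evalLam s : eval (lam s) (lam s)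
| evalApp s t s' t' u :
    eval s (lam s') -> eval t (lam t') -> eval (subst s' 0 (lam t')) u ->
    eval (app s t) u.

Definition halts (s : term) : Prop := exists v, eval s v.

Fixpoint bound (k : nat) (s : term) : bool :=
  match s with
  | var n => Nat.ltb n k
  | app s1 s2 => bound k s1 && bound k s2
  | lam s1 => bound (S k) s1
  end.

Definition closed_prog (s : term) : Prop := bound 0 s = true.

Fixpoint enc_nat (n : nat) : term :=
  match n with
  | 0 => lam (lam (var 1))
  | S m => lam (lam (app (var 0) (enc_nat m)))
  end.

(* Scott encoding of terms: the "source code" of a program *)
Fixpoint enc (s : term) : term :=
  match s with
  | var n => lam (lam (lam (app (var 2) (enc_nat n))))
  | app s1 s2 => lam (lam (lam (app (app (var 1) (enc s1)) (enc s2))))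
  | lam s1 => lam (lam (lam (app (var 0) (enc s1))))
  end.

(* running algorithm L on the source code of x:  L[x] *)
Definition run (L x : term) : term := app L (enc x).

Fixpoint dec_nat (v : term) : option nat :=
  match v with
  | lam (lam (var 1)) => Some 0
  | lam (lam (app (var 0) t)) => option_map S (dec_nat t)
  | _ => None
  end.

(* Output convention: every halting output denotes a strategy among n:
   the numeral k denotes strategy (k mod n); any other value denotes
   strategy 0. *)
Definition strategy_of (n : nat) (v : term) : nat :=
  match dec_nat v with
  | Some k => k %% n
  | None => 0
  end.

Definition outputs (n : nat) (L x : term) (i : 'I_n) : Prop :=
  exists v, eval (run L x) v /\ strategy_of n v = i.

Inductive outcome : Type := P1Wins | Draw | P1Loses.

Definition game (n1 n2 : nat) : Type := 'I_n1 -> 'I_n2 -> outcome.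

Definition strongly_intransitive (n1 n2 : nat) (C : game n1 n2) : Prop :=
  (forall i : 'I_n1, exists j : 'I_n2, C i j = P1Loses) /\
  (forall j : 'I_n2, exists i : 'I_n1, C i j = P1Wins).

(* The fixed axiomatic system, abstracted as a relation                    *)
(*   ProofOf c q p : c is a demonstration (in the system) that the         *)
(*                    program q run on the source code of p does not halt.   *)

Definition sound_system (ProofOf : term -> term -> term -> Prop) : Prop :=
  forall c q p, ProofOf c q p -> ~ halts (run q p).

Definition defeats (n1 n2 : nat) (C : game n1 n2)
  (ProofOf : term -> term -> term -> Prop) (L1 L2 : term) : Prop :=
  (exists (i : 'I_n1) (j : 'I_n2),
      outputs L1 L2 i /\ outputs L2 L1 j /\ C i j = P1Wins)
  \/
  (exists v, eval (run L1 L2) v /\ ProofOf v L2 L1).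

Definition universal_winner (n1 n2 : nat) (C : game n1 n2)
  (ProofOf : term -> term -> term -> Prop) (L1 : term) : Prop :=
  forall L2, closed_prog L2 -> defeats C ProofOf L1 L2.

(* Main.v *)
Require Import Defs.
From mathcomp Require Import all_boot.
From Stdlib Require Import PeanoNat.
Set Implicit Arguments. Unset Strict Implicit.


Definition isLam (t : term) : bool := if t is lam _ then true else false.

Inductive star : term -> term -> Prop :=
| star_refl s : star s s
| star_beta s t u : isLam t -> star (subst s 0 t) u -> star (app (lam s) t) u
| star_L s s' t u : star s s' -> star (app s' t) u -> star (app s t) u
| star_R s t t' u : star t t' -> star (app s t') u -> star (app s t) u.

Lemma star_trans s t u : star s t -> star t u -> star s u.
Proof.
elim=> {s t} [//|s t v Ht _ IH|s s' t v H1 _ _ IH2|s t t' v H1 _ _ IH2] H.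
- by apply: star_beta => //; apply: IH.
- exact: (star_L H1 (IH2 H)).
- exact: (star_R H1 (IH2 H)).
Qed.

Lemma beta1 s t : isLam t -> star (app (lam s) t) (subst s 0 t).
Proof. by move=> H; apply: star_beta => //; apply: star_refl. Qed.

Lemma star_appL s s' t : star s s' -> star (app s t) (app s' t).
Proof. by move=> H; apply: (star_L H); apply: star_refl. Qed.

Lemma star_appR s t t' : star t t' -> star (app s t) (app s t').
Proof. by move=> H; apply: (star_R H); apply: star_refl. Qed.

Lemma eval_lam s v : eval s v -> isLam v.
Proof. by elim. Qed.

Lemma eval_star s v : eval s v -> star s v.
Proof.
elim=> [s0|s0 t s' t' u _ IH1 _ IH2 _ IH3]; first exact: star_refl.
apply: star_trans (star_appL _ IH1) _.
apply: star_trans (star_appR _ IH2) _.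
by apply: star_beta.
Qed.

Lemma star_eval_gen s t : star s t -> forall v, eval t v -> eval s v.
Proof.
elim=> {s t} [s|s t u Ht _ IH|s s' t u _ IH1 _ IH2|s t t' u _ IH1 _ IH2] v Hv //.
- case: t Ht IH => // t _ IH. apply: evalApp; [constructor|constructor|exact: IH].
- have := IH2 _ Hv; move=> H; inversion H; subst.
  by apply: evalApp; [apply: IH1; eassumption|eassumption|eassumption].
- have := IH2 _ Hv; move=> H; inversion H; subst.
  by apply: evalApp; [eassumption|apply: IH1; eassumption|eassumption].
Qed.

Lemma star_eval s v : star s v -> isLam v -> eval s v.
Proof. move=> H Hv; apply: (star_eval_gen H); case: v Hv {H} => // v _; constructor. Qed.

Lemma eval_det s v1 v2 : eval s v1 -> eval s v2 -> v1 = v2.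
Proof.
move=> H; elim: H v2 => [s0|s0 t s' t' u _ IH1 _ IH2 _ IH3] v2 H2; inversion H2; subst => //.
have := IH1 _ H1; case=> E1; have := IH2 _ H3; case=> E2; subst.
exact: IH3.
Qed.

Lemma bound_mono s n m : bound n s = true -> n <= m -> bound m s = true.
Proof.
elim: s n m => [k|s IHs t IHt|s IH] n m /=.
- move=> /Nat.ltb_lt H1 H2; apply/Nat.ltb_lt. apply/ltP. apply: leq_trans H2. by apply/ltP.
- by case/andP=> H1 H2 Hnm; rewrite (IHs _ _ H1 Hnm) (IHt _ _ H2 Hnm).
- by move=> H Hnm; apply: IH H _.
Qed.

Lemma subst_closed s n k u : bound n s = true -> n <= k -> subst s k u = s.
Proof.
elim: s n k => [j|s IHs t IHt|s IH] n k /=.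
- move=> /Nat.ltb_lt H1 H2. case E: (Nat.eqb j k) => //.
  move/Nat.eqb_eq: E => E; subst. move/ltP: H1 => H1. by rewrite ltnNge H2 in H1.
- by case/andP=> H1 H2 Hnm; rewrite (IHs _ _ H1 Hnm) (IHt _ _ H2 Hnm).
- by move=> H Hnm; rewrite (IH _ _ H).
Qed.

Lemma bound_enc_nat k n : bound k (enc_nat n) = true.
Proof. elim: n k => [|n IH] k //=. Qed.

Lemma bound_enc k s : bound k (enc s) = true.
Proof. elim: s k => [n|s IHs t IHt|s IH] k /=; by rewrite ?bound_enc_nat ?IHs ?IHt ?IH. Qed.

Lemma subst_enc_nat n k u : subst (enc_nat n) k u = enc_nat n.
Proof. by apply: (subst_closed (n:=0)); rewrite ?bound_enc_nat. Qed.

Lemma subst_enc s k u : subst (enc s) k u = enc s.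
Proof. by apply: (subst_closed (n:=0)); rewrite ?bound_enc. Qed.

Lemma isLam_enc s : isLam (enc s). Proof. by case: s. Qed.
Lemma isLam_enc_nat n : isLam (enc_nat n). Proof. by case: n. Qed.

Lemma dec_enc_nat n : dec_nat (enc_nat n) = Some n.
Proof. by elim: n => //= n ->. Qed.

Definition Dfix (F : term) := lam (app F (lam (app (app (var 1) (var 1)) (var 0)))).
Definition Fix (F : term) := lam (app (app (Dfix F) (Dfix F)) (var 0)).
Arguments Fix : simpl never.
Arguments Dfix : simpl never.

Lemma subst_Fix F k u : bound 0 F = true -> subst (Fix F) k u = Fix F.
Proof.
move=> H; apply: (subst_closed (n:=0)) => //=.
by rewrite (bound_mono H).
Qed.

Lemma isLam_Fix F : isLam (Fix F). Proof. by []. Qed.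

Lemma fix_step F b a : F = lam b -> bound 0 F = true -> isLam a ->
  star (app (Fix F) a) (app (subst b 0 (Fix F)) a).
Proof.
move=> Eb HF Ha; rewrite {1}/Fix; apply: star_beta => //.
rewrite /= /Dfix /=.
have E : subst F 1 a = F by apply: (subst_closed (n:=0)).
rewrite E; eapply star_L.
  eapply beta1; reflexivity.
rewrite /= (subst_closed (n:=0) _ HF) //.
rewrite -/(Dfix F) -/(Fix F) {1}Eb.
eapply star_L; [eapply beta1; reflexivity| apply: star_refl].
Qed.

Inductive nt := NV (x : nat) | NA (s t : nt) | NL (x : nat) (s : nt) | NC (t : term).
Fixpoint idx (x : nat) (c : list nat) : nat :=
  match c with nil => 1000 | y :: c' => if Nat.eqb x y then 0 else S (idx x c') end.
Fixpoint conv (c : list nat) (s : nt) : term :=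
  match s with
  | NV x => var (idx x c)
  | NA s t => app (conv c s) (conv c t)
  | NL x s => lam (conv (x :: c) s)
  | NC t => t
  end.
Notation "s $ t" := (NA s t) (at level 40, left associativity).
Notation "'λ' x , s" := (NL x s) (at level 60, right associativity).
Coercion NV : nat >-> nt.

Definition TT := lam (lam (var 1)).
Definition FF := lam (lam (var 0)).
Definition encb (b : bool) := if b then lam (lam (var 1)) else lam (lam (var 0)).

Definition EqbF := Eval cbv [conv idx Nat.eqb TT FF] in conv nil
  (λ 0, λ 1, (1 $ (λ 2, 2 $ NC TT $ (λ 5, NC FF))
                 $ (λ 3, λ 2, 2 $ NC FF $ (λ 4, 0 $ 3 $ 4)))).
Notation EQB := (Fix EqbF).

Lemma closed_EqbF : bound 0 EqbF = true. Proof. reflexivity. Qed.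

Create HintDb sdb.
Hint Rewrite subst_enc subst_enc_nat : sdb.
Lemma sEQB k u : subst (Fix EqbF) k u = Fix EqbF. Proof. exact: subst_Fix closed_EqbF. Qed.
Hint Rewrite sEQB : sdb.

Ltac solve_isLam := first [ reflexivity | apply isLam_enc | apply isLam_enc_nat ].
Ltac solve_closed := first [ reflexivity | assumption ].

Ltac find1 := lazymatch goal with
 | |- star (app (lam ?s) ?t) _ => first [ apply beta1; solve_isLam | apply star_appR; find1 ]
 | |- star (app ?s ?t) _ => first [ apply star_appL; find1 | apply star_appR; find1 ]
 end.
Ltac findfix := lazymatch goal with
 | |- star (app (Fix ?F) ?a) _ => first [ eapply fix_step; [reflexivity | solve_closed | solve_isLam] | apply star_appR; findfix ]
 | |- star (app ?s ?t) _ => first [apply star_appL; findfix | apply star_appR; findfix] end.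
Ltac post := cbn; autorewrite with sdb.
Ltac go := eapply star_trans; [find1 | post].
Ltac gos := repeat go.
Ltac unfix := eapply star_trans; [findfix | post].
Ltac congr_with H := first [ exact H | apply star_appL; congr_with H | apply star_appR; congr_with H ].
Ltac use H := let HH := fresh "HH" in pose proof H as HH; eapply star_trans; [congr_with HH | post]; clear HH.
Ltac fin := post; gos; apply star_refl.

Lemma EQB_spec n m : star (app (app EQB (enc_nat n)) (enc_nat m)) (encb (Nat.eqb n m)).
Proof.
elim: n m => [|n IH] [|m]; unfix; try fin.
gos. use (IH m). fin.
Qed.

Definition SUCC := lam (lam (lam (app (var 0) (var 2)))).
Definition MKVAR := lam (lam (lam (lam (app (var 2) (var 3))))).
Definition MKAPP := lam (lam (lam (lam (lam (app (app (var 1) (var 4)) (var 3)))))).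
Definition MKLAM := lam (lam (lam (lam (app (var 0) (var 3))))).
Definition II := lam (var 0).

Definition SubF := Eval cbv [conv idx Nat.eqb TT FF SUCC MKVAR MKAPP MKLAM II enc enc_nat] in conv nil
  (λ 0, λ 1, 1 $ (λ 2, λ 3, λ 4, NC EQB $ 2 $ 3 $ 4 $ (NC MKVAR $ 2))
               $ (λ 5, λ 6, λ 3, λ 4, NC MKAPP $ (0 $ 5 $ 3 $ 4) $ (0 $ 6 $ 3 $ 4))
               $ (λ 5, λ 3, λ 4, NC MKLAM $ (0 $ 5 $ (NC SUCC $ 3) $ 4))).
Notation SUB := (Fix SubF).
Lemma closed_SubF : bound 0 SubF = true. Proof. reflexivity. Qed.
Lemma sSUB k u : subst SUB k u = SUB. Proof. exact: subst_Fix closed_SubF. Qed.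
Hint Rewrite sSUB : sdb.

Lemma SUB_spec s k w :
  star (app (app (app SUB (enc s)) (enc_nat k)) (enc w)) (enc (subst s k w)).
Proof.
elim: s k => [n|s IHs t IHt|s IH] k; unfix; gos.
- use (EQB_spec n k). case: (n =? k); fin.
- use (IHs k). use (IHt k). fin.
- use (IH k.+1). fin.
Qed.

Definition EvF := Eval cbv [conv idx Nat.eqb TT FF SUCC MKVAR MKAPP MKLAM II enc enc_nat] in conv nil
  (λ 0, λ 1, 1 $ (λ 2, 2)
               $ (λ 3, λ 4, 0 $ 3 $ NC II $ NC II $ (λ 5, λ 6, 0 $ (NC SUB $ 5 $ NC (enc_nat 0) $ 6)) $ (0 $ 4))
               $ (λ 3, NC MKLAM $ 3)).
Notation EV := (Fix EvF).
Lemma closed_EvF : bound 0 EvF = true. Proof. reflexivity. Qed.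
Lemma sEV k u : subst EV k u = EV. Proof. exact: subst_Fix closed_EvF. Qed.
Hint Rewrite sEV : sdb.

Lemma EV_spec s v : eval s v -> star (app EV (enc s)) (enc v).
Proof.
elim=> [s0|s0 t s' t' u _ IH1 _ IH2 _ IH3]; unfix; gos.
- fin.
- use IH1. use IH2. gos. use (SUB_spec s' 0 (lam t')). use IH3. fin.
Qed.

Definition QNF := Eval cbv [conv idx Nat.eqb TT FF SUCC MKVAR MKAPP MKLAM II enc enc_nat] in conv nil
  (λ 0, λ 1, 1 $ NC (enc (enc_nat 0)) $ (λ 2, NC MKLAM $ (NC MKLAM $ (NC MKAPP $ NC (enc (var 0)) $ (0 $ 2))))).
Notation QN := (Fix QNF).
Lemma closed_QNF : bound 0 QNF = true. Proof. reflexivity. Qed.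
Lemma sQN k u : subst QN k u = QN. Proof. exact: subst_Fix closed_QNF. Qed.
Hint Rewrite sQN : sdb.

Lemma QN_spec n : star (app QN (enc_nat n)) (enc (enc_nat n)).
Proof.
elim: n => [|n IH]; unfix; gos; first fin.
use IH. fin.
Qed.

Definition L3 (x : nt) := NC MKLAM $ (NC MKLAM $ (NC MKLAM $ x)).
Definition QF := Eval cbv [conv idx Nat.eqb TT FF SUCC MKVAR MKAPP MKLAM II enc enc_nat L3] in conv nil
  (λ 0, λ 1, 1 $ (λ 2, L3 (NC MKAPP $ NC (enc (var 2)) $ (NC QN $ 2)))
               $ (λ 3, λ 4, L3 (NC MKAPP $ (NC MKAPP $ NC (enc (var 1)) $ (0 $ 3)) $ (0 $ 4)))
               $ (λ 3, L3 (NC MKAPP $ NC (enc (var 0)) $ (0 $ 3)))).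
Notation Q := (Fix QF).
Lemma closed_QF : bound 0 QF = true. Proof. reflexivity. Qed.
Lemma sQ k u : subst Q k u = Q. Proof. exact: subst_Fix closed_QF. Qed.
Hint Rewrite sQ : sdb.

Lemma Q_spec s : star (app Q (enc s)) (enc (enc s)).
Proof.
elim: s => [n|s IHs t IHt|s IH]; unfix; gos.
- use (QN_spec n). fin.
- use IHs. use IHt. fin.
- use IH. fin.
Qed.

Definition ZZ := enc_nat 0.
Definition ONE := enc_nat 1.
Definition DecF := Eval cbv [conv idx Nat.eqb TT FF SUCC MKVAR MKAPP MKLAM II enc enc_nat ZZ ONE] in conv nil
  (λ 0, λ 1, 1 $ (λ 2, NC ZZ) $ (λ 3, λ 4, NC ZZ)
     $ (λ 5, 5 $ (λ 2, NC ZZ) $ (λ 3, λ 4, NC ZZ)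
          $ (λ 6, 6 $ (λ 2, 2 $ NC ZZ $ (λ 7, 7 $ NC ONE $ (λ 8, NC ZZ)))
                    $ (λ 9, λ 10, 9 $ (λ 2, 2 $ (λ 8, (λ 12, 12 $ NC ZZ $ (λ 7, NC SUCC $ 12)) $ (0 $ 10))
                                             $ (λ 7, λ 11, NC ZZ))
                                     $ (λ 3, λ 4, λ 11, NC ZZ) $ (λ 3, λ 11, NC ZZ) $ NC II)
                    $ (λ 3, NC ZZ)))).
Notation DEC := (Fix DecF).
Lemma closed_DecF : bound 0 DecF = true. Proof. reflexivity. Qed.
Lemma sDEC k u : subst DEC k u = DEC. Proof. exact: subst_Fix closed_DecF. Qed.
Hint Rewrite sDEC : sdb.

Definition Rv (v : term) : nat := if dec_nat v is Some k then k.+1 else 0.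

Fixpoint tsize (s : term) : nat :=
  match s with var _ => 1 | app s t => (tsize s + tsize t).+1 | lam s => (tsize s).+1 end.

Lemma DEC_spec v : star (app DEC (enc v)) (enc_nat (Rv v)).
Proof.
move: {2}(tsize v) (leqnn (tsize v)) => N; elim: N v => [|N IH] v Hv.
  by case: v Hv.
case: v Hv => [n|s t|s1] Hv; unfix; post; gos; try fin.
case: s1 Hv => [n|s t|s2] Hv; post; gos; try fin.
case: s2 Hv => [n|a b|s] Hv; post; gos; try fin.
- case: n Hv => [|[|n]] Hv; fin.
- case: a Hv => [[|n]|a1 a2|a1] Hv; post; gos; try fin.
  have Hb : tsize b <= N.
    move: Hv => /=. rewrite !ltnS. move=> H. apply: leq_trans H.
    rewrite add1n; apply: leq_trans (leqnSn _) _; apply: leq_trans (leqnSn _) _; exact: leqnSn.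
  use (IH b Hb). gos. rewrite /Rv /=. case: (dec_nat b) => [k|]; fin.
Qed.

Definition WalkF (n1 : nat) := Eval cbv [conv idx Nat.eqb TT FF SUCC MKVAR MKAPP MKLAM II enc ZZ ONE] in conv nil
  (λ 0, λ 1, λ 2, 1 $ 2 $ (λ 3, 0 $ 3 $ (NC EQB $ (NC SUCC $ 2) $ NC (enc_nat n1) $ NC ZZ $ (NC SUCC $ 2)))).

Lemma bound_Fix F k : bound 0 F = true -> bound k (Fix F) = true.
Proof. move=> H; apply: (bound_mono (n:=0)) => //=; by rewrite (bound_mono H). Qed.

Lemma closed_WalkF n1 : bound 0 (WalkF n1) = true.
Proof. by rewrite /WalkF /= bound_enc_nat. Qed.
Lemma sWALK n1 k u : subst (Fix (WalkF n1)) k u = Fix (WalkF n1).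
Proof. exact: subst_Fix (closed_WalkF n1). Qed.
Hint Rewrite sWALK : sdb.
Ltac solve_closed ::= first [ reflexivity | assumption | apply closed_WalkF ].

Lemma WALK_spec n1 k c : c < n1 ->
  star (app (app (Fix (WalkF n1)) (enc_nat k)) (enc_nat c)) (enc_nat ((c + k) %% n1)).
Proof.
elim: k c => [|k IH] c Hc; unfix; post; gos.
  by rewrite addn0 modn_small //; apply: star_refl.
have HE := EQB_spec c.+1 n1; case E: (c.+1 =? n1) in HE; use HE; gos.
- move/Nat.eqb_eq: E => E.
  have H0 : 0 < n1 by rewrite -E.
  use (IH 0 H0). rewrite -E addnS -addSn modnDl add0n. apply: star_refl.
- have H1 : c.+1 < n1.
    rewrite ltn_neqAle Hc andbT. apply/negP => /eqP E'. by rewrite E' Nat.eqb_refl in E.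
  use (IH c.+1 H1). rewrite addSn -addnS. apply: star_refl.
Qed.

Fixpoint Tab (l : seq nat) : term :=
  if l is o :: l' then lam (app (app (var 0) (enc_nat o)) (Tab l')) else lam (enc_nat 0).
Arguments Tab : simpl never.

Lemma bound_Tab k l : bound k (Tab l) = true.
Proof. elim: l k => [|o l IH] k /=; by rewrite /= ?bound_enc_nat ?IH. Qed.
Lemma sTab l k u : subst (Tab l) k u = Tab l.
Proof. apply: (subst_closed (n:=0)) => //; exact: bound_Tab. Qed.
Hint Rewrite sTab : sdb.
Lemma isLam_Tab l : isLam (Tab l). Proof. by case: l. Qed.
Ltac solve_isLam ::= first [ reflexivity | apply isLam_enc | apply isLam_enc_nat | apply isLam_Tab ].

Lemma beta_c s b t : s = lam b -> isLam t -> star (app s t) (subst b 0 t).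
Proof. by move=> -> H; apply: beta1. Qed.

Lemma Tab_spec l i : i < size l -> star (app (Tab l) (enc_nat i)) (enc_nat (nth 0 l i)).
Proof.
elim: l i => [|o l IH] i //= Hi.
eapply star_trans; [apply: beta_c; [reflexivity| apply isLam_enc_nat] | post].
case: i Hi => [|i] Hi; post; gos; first by apply: star_refl.
use (IH i Hi). apply: star_refl.
Qed.

Definition D2 (n1 : nat) (tab : seq nat) := Eval cbv [conv idx Nat.eqb TT FF SUCC MKVAR MKAPP MKLAM II ZZ ONE] in conv nil
  (λ 0, λ 1, NC (Tab tab) $ ((λ 2, 2 $ NC ZZ $ (λ 3, NC (Fix (WalkF n1)) $ 3 $ NC ZZ))
       $ (NC DEC $ (NC EV $ (NC MKAPP $ 1 $ (NC Q $ (NC MKAPP $ 0 $ (NC Q $ 0)))))))).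
Arguments D2 : simpl never.
Definition L2 n1 tab := app (D2 n1 tab) (enc (D2 n1 tab)).

Lemma bound_D2 n1 tab : bound 0 (D2 n1 tab) = true.
Proof.
by rewrite /D2 /= bound_Tab bound_enc_nat.
Qed.

Lemma main_lemma n1 tab L1 v : 0 < n1 -> size tab = n1 ->
  eval (run L1 (L2 n1 tab)) v ->
  star (run (L2 n1 tab) L1) (enc_nat (nth 0 tab (strategy_of n1 v))).
Proof.
move=> Hn Hs H.
rewrite /run /L2.
eapply star_trans; [apply star_appL; apply: beta_c; [reflexivity| apply isLam_enc] | post].
gos.
use (Q_spec (D2 n1 tab)). gos.
use (Q_spec (app (D2 n1 tab) (enc (D2 n1 tab)))). gos.
use (EV_spec H). gos.
use (DEC_spec v). gos.
have -> : strategy_of n1 v = (if Rv v is k.+1 then k %% n1 else 0).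
  by rewrite /strategy_of /Rv; case: (dec_nat v).
case: (Rv v) => [|k]; post; gos.
- have Hi : 0 < size tab by rewrite Hs.
  use (Tab_spec Hi). apply: star_refl.
- use (WALK_spec k Hn). 
  have Hi : (0 + k) %% n1 < size tab by rewrite Hs ltn_mod.
  use (Tab_spec Hi). apply: star_refl.
Qed.

Definition isLoses (o : outcome) : bool := if o is P1Loses then true else false.

Theorem theorem1 (n1 n2 : nat) (C : game n1 n2)
  (ProofOf : term -> term -> term -> Prop) :
  strongly_intransitive C ->
  sound_system ProofOf ->
  forall L1 : term, closed_prog L1 -> ~ universal_winner C ProofOf L1.
Proof.
move=> [HS1 HS2] Hsound L1 _ HU.
case: (posnP n1) => Hn1.
-
  have Hc : closed_prog (lam (lam (var 0))) by [].
  case: (HU _ Hc) => [[i _]|[v [Hv Hp]]].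
    by case: i => i; rewrite Hn1.
  apply: (Hsound _ _ _ Hp). exists (lam (var 0)).
  apply: star_eval => //. rewrite /run. apply: beta1. exact: isLam_enc.
pose f (i : 'I_n1) := if [pick j | isLoses (C i j)] is Some j then val j else 0.
pose tab := [seq f i | i <- enum 'I_n1].
have Hs : size tab = n1 by rewrite size_map size_enum_ord.
have Hc : closed_prog (L2 n1 tab).
  rewrite /closed_prog /L2; change (bound 0 (D2 n1 tab) && bound 0 (enc (D2 n1 tab)) = true).
  by rewrite bound_D2 bound_enc.
have Hmain := @main_lemma n1 tab L1 _ Hn1 Hs.
case: (HU _ Hc) => [[i [j [[v [Hv Hvi]] [[w [Hw Hwj]] Hij]]]]|[v [Hv Hp]]].
- have E := eval_det Hw (star_eval (Hmain _ Hv) (isLam_enc_nat _)).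
  subst w. move: Hwj. rewrite Hvi /strategy_of dec_enc_nat.
  rewrite (nth_map i) ?size_enum_ord // nth_ord_enum /f.
  case: pickP => [j0 Hj0|Hnone].
  + rewrite (modn_small (ltn_ord j0)) => /val_inj Ej; subst j0.
    by move: Hj0; rewrite Hij.
  + have [j1 Hj1] := HS1 i. by move: (Hnone j1); rewrite Hj1.
- apply: (Hsound _ _ _ Hp). exists (enc_nat (nth 0 tab (strategy_of n1 v))).
  apply: star_eval; [exact: Hmain| exact: isLam_enc_nat].
Qed.
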